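(* Let $\Omega\subset\mathbb{P}(\mathbb{R}^d)$ be a properly convex domain and $g\in\mathrm{Aut}(\Omega)$. If $V\subset\mathbb{R}^d$ is a linear subspace with $\dim V>1$, $\Omega\cap\mathbb{P}(V)\neq\emptyset$, and $gV=V$, then $\tau_{\Omega\cap\mathbb{P}(V)}(g)=\tau_\Omega(g)$ (where $g$ acts on $\Omega\cap\mathbb{P}(V)$ by restriction).
   Context: Properly convex domain: open subset of $\mathbb{P}(\mathbb{R}^d)$ which is a bounded convex set in some affine chart; $\Omega\cap\mathbb{P}(V)$ is then a properly convex set open in its span. Hilbert metric on a properly convex set $C$ open in its span: $H_C(x,y)=\frac12\log\frac{|x-b||y-a|}{|x-a||y-b|}$, with $a,b$ the boundary points of $C$ on the line through $x\neq y$ ordered $a,x,y,b$. For $g$ preserving $C$, $\tau_C(g)=\inf_{x\in C}H_C(x,gx)$. *)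

(* Defs.v *)
From Stdlib Require Import Reals Lra.
From Stdlib Require Fin.
Open Scope R_scope.

Definition vec (d : nat) := Fin.t d -> R.
Definition vzero {d} : vec d := fun _ => 0.
Definition vadd {d} (u v : vec d) : vec d := fun i => u i + v i.
Definition vscal {d} (c : R) (u : vec d) : vec d := fun i => c * u i.
Definition vsub {d} (u v : vec d) : vec d := fun i => u i - v i.

Definition is_linear {d} (f : vec d -> vec d) : Prop :=
  (forall u v, f (vadd u v) = vadd (f u) (f v)) /\
  (forall c u, f (vscal c u) = vscal c (f u)).
Definition is_linear_form {d} (phi : vec d -> R) : Prop :=
  (forall u v, phi (vadd u v) = phi u + phi v) /\
  (forall c u, phi (vscal c u) = c * phi u).

Definition is_GL {d} (g : vec d -> vec d) : Prop :=
  is_linear g /\ exists h : vec d -> vec d,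
    (forall u, h (g u) = u) /\ (forall u, g (h u) = u).

(** Subsets of P(R^d) are represented by their cones: sets of nonzero vectors
    invariant under nonzero scalings. *)
Definition is_proj_set {d} (S : vec d -> Prop) : Prop :=
  ~ S vzero /\ forall u c, c <> 0 -> (S u <-> S (vscal c u)).

(** Omega is a properly convex domain which is a bounded convex open set in the
    affine chart {phi = 1} (complement of P(ker phi)). *)
Definition properly_convex_in_chart {d} (phi : vec d -> R) (Om : vec d -> Prop) : Prop :=
  is_linear_form phi /\
  is_proj_set Om /\
  (exists u, Om u) /\
  (forall u, Om u -> phi u <> 0) /\
  (forall u, Om u -> exists eps, 0 < eps /\
      forall w : vec d, (forall i, Rabs (w i - u i) < eps) -> Om w) /\
  (forall u v t, Om u -> Om v -> phi u = 1 -> phi v = 1 -> 0 <= t <= 1 ->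
      Om (vadd (vscal (1 - t) u) (vscal t v))) /\
  (exists M, forall u, Om u -> phi u = 1 -> forall i, Rabs (u i) <= M).

Definition is_aut {d} (Om : vec d -> Prop) (g : vec d -> vec d) : Prop :=
  is_GL g /\ forall u, Om u <-> Om (g u).

Definition is_subspace {d} (V : vec d -> Prop) : Prop :=
  V vzero /\ (forall u v, V u -> V v -> V (vadd u v)) /\
  (forall c u, V u -> V (vscal c u)).
Definition dim_gt_1 {d} (V : vec d -> Prop) : Prop :=
  exists u v, V u /\ V v /\
    forall a b, vadd (vscal a u) (vscal b v) = vzero -> a = 0 /\ b = 0.

Definition proj_inter {d} (Om V : vec d -> Prop) : vec d -> Prop :=
  fun u => Om u /\ V u.

Definition is_lower_bound (E : R -> Prop) (m : R) : Prop := forall x, E x -> m <= x.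
Definition is_glb (E : R -> Prop) (m : R) : Prop :=
  is_lower_bound E m /\ forall b, is_lower_bound E b -> b <= m.

Definition chart_rep {d} (phi : vec d -> R) (u : vec d) : vec d := vscal (/ phi u) u.

Definition line_params {d} (C : vec d -> Prop) (x y : vec d) : R -> Prop :=
  fun t => C (vadd x (vscal t (vsub y x))).

(** Hilbert distance H_C([u],[v]) computed in the affine chart {phi = 1}:
    with x, y the chart representatives and the boundary points
    a = x + alpha (y - x), b = x + beta (y - x) (alpha = inf, beta = sup of
    the parameters of the line inside C), one has
    |x-b| = beta|y-x|, |y-a| = (1-alpha)|y-x|, |x-a| = -alpha|y-x|,
    |y-b| = (beta-1)|y-x|, so
    H = 1/2 log (|x-b||y-a| / (|x-a||y-b|)).  H([x],[x]) = 0.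
    hilbert_dist phi C u v r  means  H_C([u],[v]) = r. *)
Definition hilbert_dist {d} (phi : vec d -> R) (C : vec d -> Prop)
    (u v : vec d) (r : R) : Prop :=
  let x := chart_rep phi u in
  let y := chart_rep phi v in
  (x = y /\ r = 0) \/
  (x <> y /\ exists alpha beta,
      is_glb (line_params C x y) alpha /\
      is_lub (line_params C x y) beta /\
      r = / 2 * ln ((beta * (1 - alpha)) / ((- alpha) * (beta - 1)))).

Definition displacements {d} (phi : vec d -> R) (C : vec d -> Prop)
    (g : vec d -> vec d) : R -> Prop :=
  fun r => exists u, C u /\ hilbert_dist phi C u (g u) r.

Definition is_translation_length {d} (phi : vec d -> R) (C : vec d -> Prop)
    (g : vec d -> vec d) (m : R) : Prop :=
  is_glb (displacements phi C g) m.

(* Main.v *)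
Require Import Defs.
From Stdlib Require Import Reals Lra FunctionalExtensionality Classical PropExtensionality.
Open Scope R_scope.


Lemma vec_ext {d} (u v : vec d) : (forall i, u i = v i) -> u = v.
Proof. intros H; apply functional_extensionality; exact H. Qed.

Lemma fin_bound : forall d (f : Fin.t d -> R), exists B, 0 <= B /\ forall i, Rabs (f i) <= B.
Proof.
  induction d as [|n IH]; intros f.
  - exists 0; split; [lra|]. intros i; inversion i.
  - destruct (IH (fun i => f (Fin.FS i))) as [B [HB0 HB]].
    exists (Rmax (Rabs (f Fin.F1)) B); split.
    + apply Rle_trans with B; [lra| apply Rmax_r].
    + intros i. pattern i; apply Fin.caseS'.
      * apply Rmax_l.
      * intros j; apply Rle_trans with B; [apply HB| apply Rmax_r].
Qed.

Section Lin.
Context {d : nat}.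
Lemma lin_add (f : vec d -> vec d) : is_linear f -> forall u v, f (vadd u v) = vadd (f u) (f v).
Proof. intros [H _]; exact H. Qed.
Lemma lin_scal (f : vec d -> vec d) : is_linear f -> forall c u, f (vscal c u) = vscal c (f u).
Proof. intros [_ H]; exact H. Qed.
Lemma lin_sub (f : vec d -> vec d) : is_linear f -> forall u v, f (vsub u v) = vsub (f u) (f v).
Proof.
  intros Hf u v.
  assert (E : vsub u v = vadd u (vscal (-1) v)).
  { apply vec_ext; intros i; unfold vsub, vadd, vscal; ring. }
  rewrite E, lin_add, lin_scal by exact Hf.
  apply vec_ext; intros i; unfold vsub, vadd, vscal; ring.
Qed.
Lemma lin_zero (f : vec d -> vec d) : is_linear f -> f vzero = vzero.
Proof.
  intros Hf. assert (E : (vzero : vec d) = vscal 0 vzero).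
  { apply vec_ext; intros i; unfold vscal, vzero; ring. }
  rewrite E, lin_scal by exact Hf. apply vec_ext; intros i; unfold vscal, vzero; ring.
Qed.
Lemma form_add (f : vec d -> R) : is_linear_form f -> forall u v, f (vadd u v) = f u + f v.
Proof. intros [H _]; exact H. Qed.
Lemma form_scal (f : vec d -> R) : is_linear_form f -> forall c u, f (vscal c u) = c * f u.
Proof. intros [_ H]; exact H. Qed.
Lemma form_sub (f : vec d -> R) : is_linear_form f -> forall u v, f (vsub u v) = f u - f v.
Proof.
  intros Hf u v.
  assert (E : vsub u v = vadd u (vscal (-1) v)).
  { apply vec_ext; intros i; unfold vsub, vadd, vscal; ring. }
  rewrite E, form_add, form_scal by exact Hf. ring.
Qed.
End Lin.

Definition Lp {d} (x y : vec d) (t : R) : vec d := vadd x (vscal t (vsub y x)).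

Section Cone.
Context {d : nat} (phi : vec d -> R) (Om : vec d -> Prop).
Hypothesis Hphi : is_linear_form phi.
Hypothesis Hproj : is_proj_set Om.
Hypothesis Hphi0 : forall u, Om u -> phi u <> 0.
Hypothesis Hopen : forall u, Om u -> exists eps, 0 < eps /\
      forall w : vec d, (forall i, Rabs (w i - u i) < eps) -> Om w.
Hypothesis Hconv : forall u v t, Om u -> Om v -> phi u = 1 -> phi v = 1 -> 0 <= t <= 1 ->
      Om (vadd (vscal (1 - t) u) (vscal t v)).

Definition Kc (w : vec d) : Prop := Om w /\ 0 < phi w.
Definition Kb (w : vec d) : Prop := Kc w \/ w = vzero.

Lemma Om_scal u c : Om u -> c <> 0 -> Om (vscal c u).
Proof. intros H Hc. destruct Hproj as [_ Hp]. apply (Hp u c Hc); exact H. Qed.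

Lemma Kc_scal u c : Kc u -> 0 < c -> Kc (vscal c u).
Proof.
  intros [H1 H2] Hc. split. apply Om_scal; auto; lra.
  rewrite (form_scal phi Hphi). apply Rmult_lt_0_compat; auto.
Qed.

Lemma rep_phi u : phi u <> 0 -> phi (chart_rep phi u) = 1.
Proof. intros H. unfold chart_rep. rewrite (form_scal phi Hphi). field; auto. Qed.

Lemma rep_Om u : Om u -> Om (chart_rep phi u).
Proof. intros H. unfold chart_rep. apply Om_scal; auto. apply Rinv_neq_0_compat; auto. Qed.

Lemma Kc_add u v : Kc u -> Kc v -> Kc (vadd u v).
Proof.
  intros [Hu pu] [Hv pv].
  set (p := phi u) in *. set (q := phi v) in *.
  set (t := q / (p + q)).
  assert (Ht : 0 <= t <= 1).
  { assert (t * (p + q) = q) by (unfold t; field; lra). split; nra. }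
  pose proof (Hconv (chart_rep phi u) (chart_rep phi v) t (rep_Om u Hu) (rep_Om v Hv)
      (rep_phi u (Rgt_not_eq _ _ pu)) (rep_phi v (Rgt_not_eq _ _ pv)) Ht) as Hw.
  assert (E : vadd u v = vscal (p + q) (vadd (vscal (1 - t) (chart_rep phi u)) (vscal t (chart_rep phi v)))).
  { apply vec_ext; intros i. unfold chart_rep, t. fold p q. unfold vadd, vscal. field. split; lra. }
  split.
  - rewrite E. apply Om_scal; auto; lra.
  - rewrite (form_add phi Hphi). fold p q. lra.
Qed.

Lemma Kb_zero : Kb vzero.
Proof. right; reflexivity. Qed.

Lemma vadd_zero_r (u : vec d) : vadd u vzero = u.
Proof. apply vec_ext; intros; unfold vadd, vzero; ring. Qed.
Lemma vadd_zero_l (u : vec d) : vadd vzero u = u.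
Proof. apply vec_ext; intros; unfold vadd, vzero; ring. Qed.

Lemma Kc_Kb_add u v : Kc u -> Kb v -> Kc (vadd u v).
Proof. intros Hu [Hv| ->]. apply Kc_add; auto. rewrite vadd_zero_r; auto. Qed.
Lemma Kb_Kc_add u v : Kb u -> Kc v -> Kc (vadd u v).
Proof. intros [Hu| ->] Hv. apply Kc_add; auto. rewrite vadd_zero_l; auto. Qed.
Lemma Kb_add u v : Kb u -> Kb v -> Kb (vadd u v).
Proof. intros [Hu| ->] Hv. left; apply Kc_Kb_add; auto. rewrite vadd_zero_l; auto. Qed.
Lemma Kb_scal u c : Kb u -> 0 <= c -> Kb (vscal c u).
Proof.
  intros [Hu| ->] Hc.
  - destruct (Req_dec c 0) as [->|Hc'].
    + right; apply vec_ext; intros; unfold vscal, vzero; ring.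
    + left; apply Kc_scal; auto; lra.
  - right; apply vec_ext; intros; unfold vscal, vzero; ring.
Qed.
Lemma Kc_Kb u : Kc u -> Kb u.
Proof. intros; left; auto. Qed.

Lemma open_dir u : Om u -> forall w, exists s, 0 < s /\ forall s', Rabs s' <= s -> Om (vadd u (vscal s' w)).
Proof.
  intros Hu w. destruct (Hopen u Hu) as [eps [He Hw]].
  destruct (fin_bound d w) as [B [HB0 HB]].
  exists (eps / (2 * (B + 1))). split.
  - apply Rdiv_lt_0_compat; lra.
  - intros s' Hs. apply Hw. intros i. unfold vadd, vscal.
    replace (u i + s' * w i - u i) with (s' * w i) by ring.
    rewrite Rabs_mult.
    apply Rle_lt_trans with (eps / (2 * (B + 1)) * B).
    + apply Rmult_le_compat; auto using Rabs_pos.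
    + assert (eps / (2 * (B+1)) * B = eps * (B / (2*(B+1)))) as -> by (field; lra).
      assert (B / (2*(B+1)) < 1).
      { apply Rmult_lt_reg_r with (2*(B+1)); [lra|]. unfold Rdiv. rewrite Rmult_assoc, Rinv_l by lra. lra. }
      assert (0 <= B / (2*(B+1))) by (apply Rle_mult_inv_pos; lra).
      nra.
Qed.

Lemma Kc_dom x w : Kc x -> exists c, 0 < c /\ Kc (vsub (vscal c x) w).
Proof.
  intros [Hx px]. destruct (open_dir x Hx (vscal (-1) w)) as [s [Hs Hs']].
  set (s' := Rmin s (phi x / (Rabs (phi w) + 1))).
  assert (Hpos : 0 < s').
  { unfold s'. apply Rmin_glb_lt; auto. apply Rdiv_lt_0_compat; auto. pose proof (Rabs_pos (phi w)); lra. }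
  assert (Hle1 : s' <= s) by apply Rmin_l.
  assert (Hle2 : s' <= phi x / (Rabs (phi w) + 1)) by apply Rmin_r.
  exists (/ s'). split. apply Rinv_0_lt_compat; auto.
  assert (E : vsub (vscal (/ s') x) w = vscal (/ s') (vadd x (vscal s' (vscal (-1) w)))).
  { apply vec_ext; intros i; unfold vsub, vscal, vadd. field. lra. }
  rewrite E. apply Kc_scal; [|apply Rinv_0_lt_compat; auto].
  split. apply Hs'. rewrite Rabs_right; lra.
  rewrite (form_add phi Hphi), !(form_scal phi Hphi).
  assert (s' * Rabs (phi w) < phi x).
  { apply Rle_lt_trans with (phi x / (Rabs (phi w) + 1) * Rabs (phi w)).
    apply Rmult_le_compat_r; auto using Rabs_pos.
    assert (phi x / (Rabs (phi w) + 1) * Rabs (phi w) = phi x * (Rabs (phi w) / (Rabs (phi w) + 1))) as -> by (field; pose proof (Rabs_pos (phi w)); lra).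
    assert (Rabs (phi w) / (Rabs (phi w) + 1) < 1).
    { pose proof (Rabs_pos (phi w)). apply Rmult_lt_reg_r with (Rabs (phi w)+1); [lra|]. unfold Rdiv. rewrite Rmult_assoc, Rinv_l by lra. lra. }
    nra. }
  pose proof (Rle_abs (phi w)) as Ha.
  assert (0 <= s' * (Rabs (phi w) - phi w)) by (apply Rmult_le_pos; lra).
  rewrite Rmult_minus_distr_l in H0. lra.
Qed.

End Cone.

Lemma glb_ex (E : R -> Prop) : (exists x, E x) -> (exists B, forall x, E x -> B <= x) -> exists m, is_glb E m.
Proof.
  intros [x Hx] [B HB].
  destruct (completeness (fun y => E (- y))) as [m [Hm1 Hm2]].
  - exists (- B). intros y Hy. apply HB in Hy. lra.
  - exists (- x). rewrite Ropp_involutive; auto.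
  - exists (- m). split.
    + intros y Hy. assert (- y <= m). { apply Hm1. rewrite Ropp_involutive; auto. } lra.
    + intros b Hb. assert (m <= - b). { apply Hm2. intros y Hy. apply Hb in Hy. lra. } lra.
Qed.

Lemma G_eq t : t < 0 -> (1 - t) / (- t) = 1 + / (- t).
Proof. intros; field; lra. Qed.
Lemma K_eq t : 1 < t -> t / (t - 1) = 1 + / (t - 1).
Proof. intros; field; lra. Qed.
Lemma F_eq a b : a < 0 -> 1 < b -> b * (1 - a) / ((- a) * (b - 1)) = ((1 - a) / (- a)) * (b / (b - 1)).
Proof. intros; field; lra. Qed.

Lemma F_mono a t1 b t2 : a <= t1 -> t1 < 0 -> 1 < t2 -> t2 <= b ->
  ((1 - a) / (- a)) * (b / (b - 1)) <= ((1 - t1) / (- t1)) * (t2 / (t2 - 1)).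
Proof.
  intros. rewrite !G_eq, !K_eq by lra.
  assert (/ (- a) <= / (- t1)) by (apply Rinv_le_contravar; lra).
  assert (/ (b - 1) <= / (t2 - 1)) by (apply Rinv_le_contravar; lra).
  assert (0 < / (- a)) by (apply Rinv_0_lt_compat; lra).
  assert (0 < / (b - 1)) by (apply Rinv_0_lt_compat; lra).
  apply Rmult_le_compat; lra.
Qed.

Lemma F_gt1 a b : a < 0 -> 1 < b -> 1 < ((1 - a) / (- a)) * (b / (b - 1)).
Proof.
  intros. rewrite G_eq, K_eq by lra.
  assert (0 < / (- a)) by (apply Rinv_0_lt_compat; lra).
  assert (0 < / (b - 1)) by (apply Rinv_0_lt_compat; lra). nra.
Qed.

Lemma ln_le' x y : 0 < x -> x <= y -> ln x <= ln y.
Proof. intros Hx [H|H]. left; apply ln_increasing; auto. subst; lra. Qed.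

Lemma F_approx a s1 b s2 mu : a < 0 -> 1 < b -> 0 < mu < 1 ->
  a <= s1 -> s1 < a * mu -> 1 + (b - 1) * mu < s2 -> s2 <= b ->
  ((1 - s1) / (- s1)) * (s2 / (s2 - 1)) <= ((1 - a) / (- a)) * (b / (b - 1)) / (mu * mu).
Proof.
  intros Ha Hb Hmu H1 H2 H3 H4.
  assert (s1 < 0) by nra. assert (1 < s2) by nra.
  rewrite !G_eq, !K_eq by lra.
  assert (E1 : / (- s1) <= / (- a) / mu).
  { assert (/ (- a) / mu = / (- a * mu)) as -> by (field; lra).
    apply Rinv_le_contravar; nra. }
  assert (E2 : / (s2 - 1) <= / (b - 1) / mu).
  { assert (/ (b - 1) / mu = / ((b - 1) * mu)) as -> by (field; lra).
    apply Rinv_le_contravar; nra. }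
  assert (0 < / (- a)) by (apply Rinv_0_lt_compat; lra).
  assert (0 < / (b - 1)) by (apply Rinv_0_lt_compat; lra).
  assert (0 < / (- s1)) by (apply Rinv_0_lt_compat; lra).
  assert (0 < / (s2 - 1)) by (apply Rinv_0_lt_compat; lra).
  assert (E3 : 1 + / (- a) / mu <= (1 + / (- a)) / mu).
  { unfold Rdiv. assert (1 <= / mu). { rewrite <- Rinv_1. apply Rinv_le_contravar; lra. } nra. }
  assert (E4 : 1 + / (b - 1) / mu <= (1 + / (b - 1)) / mu).
  { unfold Rdiv. assert (1 <= / mu). { rewrite <- Rinv_1. apply Rinv_le_contravar; lra. } nra. }
  assert (((1 + / (- a)) * (1 + / (b - 1))) / (mu * mu) = ((1 + / (- a)) / mu) * ((1 + / (b - 1)) / mu)) as -> by (field; lra).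
  apply Rmult_le_compat; lra.
Qed.

Section Hilb.
Context {d : nat} (phi : vec d -> R) (Om : vec d -> Prop).
Hypothesis Hphi : is_linear_form phi.
Hypothesis Hproj : is_proj_set Om.
Hypothesis Hphi0 : forall u, Om u -> phi u <> 0.
Hypothesis Hopen : forall u, Om u -> exists eps, 0 < eps /\
      forall w : vec d, (forall i, Rabs (w i - u i) < eps) -> Om w.
Hypothesis Hbdd : exists M, forall u, Om u -> phi u = 1 -> forall i, Rabs (u i) <= M.
Variable C : vec d -> Prop.
Hypothesis HCOm : forall u, C u -> Om u.
Hypothesis HCscal : forall u c, C u -> c <> 0 -> C (vscal c u).
Hypothesis HCline : forall x y t, C x -> C y -> Om (Lp x y t) -> C (Lp x y t).

Lemma Lp_phi x y t : phi x = 1 -> phi y = 1 -> phi (Lp x y t) = 1.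
Proof. intros. unfold Lp. rewrite (form_add phi Hphi), (form_scal phi Hphi), (form_sub phi Hphi). rewrite H, H0; ring. Qed.

Lemma rep_C u : C u -> C (chart_rep phi u) /\ phi (chart_rep phi u) = 1.
Proof.
  intros H. split. unfold chart_rep. apply HCscal; auto. apply Rinv_neq_0_compat; auto.
  apply rep_phi; auto.
Qed.

Lemma params_bdd x y : C x -> C y -> phi x = 1 -> phi y = 1 -> x <> y ->
  exists B, forall t, line_params C x y t -> t <= B /\ - B <= t.
Proof.
  intros Cx Cy px py Hne.
  assert (exists i, x i <> y i) as [i Hi].
  { apply not_all_ex_not. intros Hall. apply Hne. apply vec_ext; auto. }
  destruct Hbdd as [M HM].
  exists ((M + Rabs (x i)) / Rabs (y i - x i)).
  intros t Ht. unfold line_params in Ht.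
  assert (Hd : 0 < Rabs (y i - x i)) by (apply Rabs_pos_lt; lra).
  pose proof (HM _ (HCOm _ Ht) (Lp_phi x y t px py) i) as H1. unfold Lp, vadd, vscal, vsub in H1.
  assert (Rabs t * Rabs (y i - x i) <= M + Rabs (x i)).
  { rewrite <- Rabs_mult.
    replace (t * (y i - x i)) with ((x i + t * (y i - x i)) - x i) by ring.
    eapply Rle_trans. apply Rabs_triang. rewrite Rabs_Ropp. lra. }
  assert (Rabs t <= (M + Rabs (x i)) / Rabs (y i - x i)).
  { apply Rmult_le_reg_r with (Rabs (y i - x i)); auto. unfold Rdiv. rewrite Rmult_assoc, Rinv_l by lra. lra. }
  pose proof (Rle_abs t). pose proof (Rle_abs (- t)) as Hm. rewrite Rabs_Ropp in Hm. lra.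
Qed.

Lemma params_ext x y : C x -> C y -> exists t1 t2, t1 < 0 /\ 1 < t2 /\
   line_params C x y t1 /\ line_params C x y t2.
Proof.
  intros Cx Cy.
  destruct (open_dir Om Hopen x (HCOm _ Cx) (vsub y x)) as [s1 [Hs1 Hs1']].
  destruct (open_dir Om Hopen y (HCOm _ Cy) (vsub y x)) as [s2 [Hs2 Hs2']].
  exists (- s1), (1 + s2). repeat split; try lra; unfold line_params; apply HCline; auto.
  - unfold Lp. apply Hs1'. rewrite Rabs_Ropp, Rabs_right; lra.
  - assert (E : Lp x y (1 + s2) = vadd y (vscal s2 (vsub y x))).
    { apply vec_ext; intros i; unfold Lp, vadd, vscal, vsub; ring. }
    rewrite E. apply Hs2'. rewrite Rabs_right; lra.
Qed.

Lemma hd_exists u v : C u -> C v -> exists r, hilbert_dist phi C u v r.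
Proof.
  intros Cu Cv. destruct (rep_C u Cu) as [Cx px]. destruct (rep_C v Cv) as [Cy py].
  unfold hilbert_dist.
  set (x := chart_rep phi u) in *. set (y := chart_rep phi v) in *.
  destruct (classic (x = y)) as [E|Hne].
  - exists 0; left; auto.
  - destruct (params_bdd x y Cx Cy px py Hne) as [B HB].
    assert (Hn : exists t, line_params C x y t).
    { exists 0. unfold line_params. replace (vadd x (vscal 0 (vsub y x))) with x; auto.
      apply vec_ext; intros i; unfold vadd, vscal, vsub; ring. }
    destruct (glb_ex (line_params C x y) Hn) as [a Ha].
    { exists (- B). intros t Ht; apply HB; auto. }
    destruct (completeness (line_params C x y)) as [b Hb].
    { exists B. intros t Ht; apply HB; auto. }
    { auto. }
    eexists; right; split; auto. exists a, b. split; [exact Ha|]. split; [exact Hb|]. reflexivity.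
Qed.

Lemma hd_upper u v r t1 t2 : C u -> C v -> hilbert_dist phi C u v r ->
  t1 < 0 -> 1 < t2 ->
  line_params C (chart_rep phi u) (chart_rep phi v) t1 ->
  line_params C (chart_rep phi u) (chart_rep phi v) t2 ->
  r <= / 2 * ln (((1 - t1) / (- t1)) * (t2 / (t2 - 1))).
Proof.
  intros Cu Cv Hd Ht1 Ht2 P1 P2.
  assert (0 < ln (((1 - t1) / (- t1)) * (t2 / (t2 - 1)))).
  { rewrite <- ln_1. apply ln_increasing; [lra|]. apply F_gt1; auto. }
  destruct Hd as [[_ ->]|[Hne [a [b [Ha [Hb ->]]]]]]; [lra|].
  assert (a <= t1) by (apply Ha; auto).
  assert (t2 <= b) by (apply Hb; auto).
  apply Rmult_le_compat_l; [lra|].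
  rewrite F_eq by lra. apply ln_le'.
  - rewrite <- F_eq by lra. pose proof (F_gt1 a b ltac:(lra) ltac:(lra)). rewrite <- F_eq in H2 by lra. lra.
  - apply F_mono; lra.
Qed.

Lemma hd_nonneg u v r : C u -> C v -> hilbert_dist phi C u v r -> 0 <= r.
Proof.
  intros Cu Cv Hd.
  destruct (rep_C u Cu) as [Cx px]. destruct (rep_C v Cv) as [Cy py].
  destruct Hd as [[_ ->]|[Hne [a [b [Ha [Hb ->]]]]]]; [lra|].
  destruct (params_ext _ _ Cx Cy) as [t1 [t2 [H1 [H2 [P1 P2]]]]].
  assert (a <= t1) by (apply Ha; auto).
  assert (t2 <= b) by (apply Hb; auto).
  rewrite F_eq by lra. assert (0 < ln (((1 - a) / (- a)) * (b / (b - 1)))).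
  { rewrite <- ln_1. apply ln_increasing; [lra|]. apply F_gt1; lra. }
  lra.
Qed.

Lemma hd_lower u v r mu : C u -> C v -> hilbert_dist phi C u v r ->
  chart_rep phi u <> chart_rep phi v -> 0 < mu < 1 ->
  exists s1 s2, s1 < 0 /\ 1 < s2 /\
    line_params C (chart_rep phi u) (chart_rep phi v) s1 /\
    line_params C (chart_rep phi u) (chart_rep phi v) s2 /\
    ((1 - s1) / (- s1)) * (s2 / (s2 - 1)) <= exp (2 * r) / (mu * mu).
Proof.
  intros Cu Cv Hd Hne0 Hmu.
  destruct (rep_C u Cu) as [Cx px]. destruct (rep_C v Cv) as [Cy py].
  destruct Hd as [[E _]|[Hne [a [b [Ha [Hb ->]]]]]]; [contradiction|].
  destruct (params_ext _ _ Cx Cy) as [t1 [t2 [H1 [H2 [P1 P2]]]]].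
  assert (a <= t1) by (apply Ha; auto).
  assert (t2 <= b) by (apply Hb; auto).
  assert (Hs1 : exists s1, line_params C (chart_rep phi u) (chart_rep phi v) s1 /\ a <= s1 /\ s1 < a * mu).
  { apply not_all_not_ex. intros Hn.
    assert (a * mu <= a). { apply Ha. intros t Ht. apply Rnot_lt_le. intros Hlt.
      apply (Hn t). split; auto. split; [apply Ha; auto | auto]. } nra. }
  assert (Hs2 : exists s2, line_params C (chart_rep phi u) (chart_rep phi v) s2 /\ s2 <= b /\ 1 + (b - 1) * mu < s2).
  { apply not_all_not_ex. intros Hn.
    assert (b <= 1 + (b - 1) * mu). { apply Hb. intros t Ht. apply Rnot_lt_le. intros Hlt.
      apply (Hn t). split; auto. split; [apply Hb; auto | auto]. } nra. }
  destruct Hs1 as [s1 [Q1 [Q1a Q1b]]]. destruct Hs2 as [s2 [Q2 [Q2a Q2b]]].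
  exists s1, s2. assert (s1 < 0) by nra. assert (1 < s2) by nra.
  repeat split; auto.
  replace (2 * (/ 2 * ln (b * (1 - a) / (- a * (b - 1))))) with (ln (b * (1 - a) / (- a * (b - 1)))) by field.
  rewrite exp_ln. 2:{ rewrite F_eq by lra. pose proof (F_gt1 a b ltac:(lra) ltac:(lra)). lra. }
  rewrite F_eq by lra. apply F_approx; lra.
Qed.

End Hilb.

Fixpoint hp {d} (f : vec d -> vec d) (n : nat) (u : vec d) : vec d :=
  match n with O => u | S m => f (hp f m u) end.

Lemma hp_lin {d} (f : vec d -> vec d) n : is_linear f -> is_linear (hp f n).
Proof.
  intros Hf. induction n as [|n IH]; split; intros; simpl; auto.
  - rewrite (lin_add _ IH), (lin_add _ Hf); auto.
  - rewrite (lin_scal _ IH), (lin_scal _ Hf); auto.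
Qed.

Section Series.
Context {d : nat} (phi : vec d -> R) (Om : vec d -> Prop).
Hypothesis Hphi : is_linear_form phi.
Hypothesis Hproj : is_proj_set Om.
Hypothesis Hphi0 : forall u, Om u -> phi u <> 0.
Hypothesis Hconv : forall u v t, Om u -> Om v -> phi u = 1 -> phi v = 1 -> 0 <= t <= 1 ->
      Om (vadd (vscal (1 - t) u) (vscal t v)).
Variables h k : vec d -> vec d.
Hypothesis Hh : is_linear h.
Hypothesis Hk : is_linear k.
Hypothesis Hhk : forall u, h (k u) = u.
Hypothesis HhK : forall u, Kc phi Om u -> Kc phi Om (h u).
Hypothesis HkK : forall u, Kc phi Om u -> Kc phi Om (k u).
Variable y0 : vec d.
Let kbadd := Kb_add phi Om Hphi Hproj Hphi0 Hconv.
Let kcbadd := Kc_Kb_add phi Om Hphi Hproj Hphi0 Hconv.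
Let kbscal := Kb_scal phi Om Hphi Hproj.
Let kcscal := Kc_scal phi Om Hphi Hproj.

Fixpoint Rs (f : vec d -> vec d) (rho : R) (N : nat) : vec d :=
  match N with
  | O => vzero
  | S n => vadd (Rs f rho n) (vscal (/ rho ^ (S n)) (hp f (S n) y0))
  end.

Lemma hp_K f n u : (forall u, Kc phi Om u -> Kc phi Om (f u)) -> Kc phi Om u -> Kc phi Om (hp f n u).
Proof. intros Hf Hu; induction n; simpl; auto. Qed.

Lemma Rs_Kb f rho N : 0 < rho -> (forall u, Kc phi Om u -> Kc phi Om (f u)) -> Kc phi Om y0 -> Kb phi Om (Rs f rho N).
Proof.
  intros Hr Hf Hy. induction N; simpl. apply Kb_zero.
  apply kbadd; auto. apply kbscal; [left; apply (hp_K f (S N)); auto|].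
  left. apply Rinv_0_lt_compat. apply (pow_lt rho (S N)); auto.
Qed.

Lemma L1 rho N : rho <> 0 ->
  h (Rs h rho N) = vadd (vsub (vscal rho (Rs h rho N)) (h y0)) (vscal (/ rho ^ N) (hp h (S N) y0)).
Proof.
  intros Hr. induction N as [|N IH].
  - simpl. rewrite (lin_zero _ Hh). apply vec_ext; intros i. unfold vadd, vsub, vscal, vzero. field.
  - change (Rs h rho (S N)) with (vadd (Rs h rho N) (vscal (/ rho ^ (S N)) (hp h (S N) y0))).
    rewrite (lin_add _ Hh), (lin_scal _ Hh), IH.
    change (h (hp h (S N) y0)) with (hp h (S (S N)) y0).
    apply vec_ext; intros i. unfold vadd, vsub, vscal. simpl. field. split; auto. apply pow_nonzero; auto.
Qed.

Lemma L2 rho' N : rho' <> 0 ->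
  h (Rs k rho' N) = vsub (vadd (vscal (/ rho') (Rs k rho' N)) (vscal (/ rho') y0)) (vscal (/ rho' ^ (S N)) (hp k N y0)).
Proof.
  intros Hr. induction N as [|N IH].
  - simpl. rewrite (lin_zero _ Hh). apply vec_ext; intros i. unfold vadd, vsub, vscal, vzero. field. auto.
  - change (Rs k rho' (S N)) with (vadd (Rs k rho' N) (vscal (/ rho' ^ (S N)) (hp k (S N) y0))).
    rewrite (lin_add _ Hh), (lin_scal _ Hh), IH.
    change (hp k (S N) y0) with (k (hp k N y0)). rewrite Hhk.
    apply vec_ext; intros i. unfold vadd, vsub, vscal. simpl. field. split; auto. apply pow_nonzero; auto.
Qed.

Definition Ym rho rho' N := vadd y0 (vadd (Rs h rho N) (Rs k rho' N)).

Lemma key rho rho' N Cst a :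
  0 < rho -> 0 < rho' -> Kc phi Om y0 ->
  Kb phi Om (vsub (vscal (Cst * a ^ (S N)) y0) (hp h (S N) y0)) ->
  0 < rho - / rho' - / rho ^ N * (Cst * a ^ (S N)) -> 0 <= rho - / rho' ->
  Kc phi Om (vsub (vscal rho (Ym rho rho' N)) (h (Ym rho rho' N))).
Proof.
  intros Hr Hr' Hy0 HB He He'.
  set (e := rho - / rho' - / rho ^ N * (Cst * a ^ (S N))) in *.
  assert (E : vsub (vscal rho (Ym rho rho' N)) (h (Ym rho rho' N)) =
     vadd (vscal e y0) (vadd (vscal (/ rho ^ N) (vsub (vscal (Cst * a ^ (S N)) y0) (hp h (S N) y0)))
       (vadd (vscal (rho - / rho') (Rs k rho' N)) (vscal (/ rho' ^ (S N)) (hp k N y0))))).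
  { unfold Ym. rewrite !(lin_add _ Hh), L1, L2 by lra.
    apply vec_ext; intros i. unfold e, vadd, vsub, vscal. field. repeat split; try apply pow_nonzero; lra. }
  assert (Hpos : 0 < rho * rho' - 1 \/ True) by (right; auto).
  rewrite E. apply kcbadd.
  - apply kcscal; auto.
  - apply kbadd.
    + apply kbscal; auto. left; apply Rinv_0_lt_compat, pow_lt; auto.
    + apply kbadd.
      * apply kbscal; [apply Rs_Kb; auto | exact He'].
      * apply kbscal. left; apply hp_K; auto.
        left; apply Rinv_0_lt_compat, pow_lt; auto.
Qed.
End Series.

Section Conv.
Context {d : nat} (phi : vec d -> R) (Om : vec d -> Prop).
Hypothesis Hphi : is_linear_form phi.
Hypothesis Hproj : is_proj_set Om.
Hypothesis Hphi0 : forall u, Om u -> phi u <> 0.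
Hypothesis Hconv : forall u v t, Om u -> Om v -> phi u = 1 -> phi v = 1 -> 0 <= t <= 1 ->
      Om (vadd (vscal (1 - t) u) (vscal t v)).
Let kbadd := Kb_add phi Om Hphi Hproj Hphi0 Hconv.
Let kcbadd := Kc_Kb_add phi Om Hphi Hproj Hphi0 Hconv.
Let kbcadd := Kb_Kc_add phi Om Hphi Hproj Hphi0 Hconv.
Let kbscal := Kb_scal phi Om Hphi Hproj.
Let kcscal := Kc_scal phi Om Hphi Hproj.

Lemma conv_ab1 x y lam t : phi x = 1 -> phi y = 1 -> 0 < lam -> t < 0 -> Om (Lp x y t) ->
  Kc phi Om (vsub (vscal (lam * (1 - t) / (- t)) x) (vscal lam y)).
Proof.
  intros px py Hl Ht HL.
  assert (E : vsub (vscal (lam * (1 - t) / (- t)) x) (vscal lam y) = vscal (lam / (- t)) (Lp x y t)).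
  { apply vec_ext; intros i; unfold Lp, vsub, vadd, vscal. field. lra. }
  rewrite E. apply kcscal. split; auto. rewrite (Lp_phi phi Hphi); lra.
  apply Rdiv_lt_0_compat; lra.
Qed.

Lemma conv_ab2 x y lam t : phi x = 1 -> phi y = 1 -> 0 < lam -> 1 < t -> Om (Lp x y t) ->
  Kc phi Om (vsub (vscal (t / (lam * (t - 1))) (vscal lam y)) x).
Proof.
  intros px py Hl Ht HL.
  assert (E : vsub (vscal (t / (lam * (t - 1))) (vscal lam y)) x = vscal (/ (t - 1)) (Lp x y t)).
  { apply vec_ext; intros i; unfold Lp, vsub, vadd, vscal. field. lra. }
  rewrite E. apply kcscal. split; auto. rewrite (Lp_phi phi Hphi); lra.
  apply Rinv_0_lt_compat; lra.
Qed.

Lemma conv_ba1 x y lam a : phi x = 1 -> phi y = 1 -> 0 < lam ->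
  Kc phi Om (vsub (vscal a x) (vscal lam y)) -> lam < a /\ Om (Lp x y (- lam / (a - lam))).
Proof.
  intros px py Hl [HO Hp].
  rewrite (form_sub phi Hphi), !(form_scal phi Hphi), px, py in Hp.
  split. lra.
  assert (E : Lp x y (- lam / (a - lam)) = vscal (/ (a - lam)) (vsub (vscal a x) (vscal lam y))).
  { apply vec_ext; intros i; unfold Lp, vsub, vadd, vscal. field. lra. }
  rewrite E. apply Om_scal; auto. apply Rinv_neq_0_compat; lra.
Qed.

Lemma conv_ba2 x y lam b : phi x = 1 -> phi y = 1 -> 0 < lam ->
  Kc phi Om (vsub (vscal b (vscal lam y)) x) -> 1 < b * lam /\ Om (Lp x y (b * lam / (b * lam - 1))).
Proof.
  intros px py Hl [HO Hp].
  rewrite (form_sub phi Hphi), !(form_scal phi Hphi), px, py in Hp.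
  split. lra.
  assert (E : Lp x y (b * lam / (b * lam - 1)) = vscal (/ (b * lam - 1)) (vsub (vscal b (vscal lam y)) x)).
  { apply vec_ext; intros i; unfold Lp, vsub, vadd, vscal. field. lra. }
  rewrite E. apply Om_scal; auto. apply Rinv_neq_0_compat; lra.
Qed.

Lemma pow_bound f x a n : is_linear f -> (forall u, Kc phi Om u -> Kc phi Om (f u)) -> 0 < a ->
  Kc phi Om (vsub (vscal a x) (f x)) -> Kb phi Om (vsub (vscal (a ^ n) x) (hp f n x)).
Proof.
  intros Hf HfK Ha Hx. induction n as [|n IH].
  - right. apply vec_ext; intros i; unfold vsub, vscal, vzero; simpl; ring.
  - assert (E : vsub (vscal (a ^ S n) x) (hp f (S n) x) =
       vadd (vscal a (vsub (vscal (a ^ n) x) (hp f n x))) (hp f n (vsub (vscal a x) (f x)))).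
    { rewrite (lin_sub _ (hp_lin f n Hf)), (lin_scal _ (hp_lin f n Hf)).
      assert (hp f n (f x) = hp f (S n) x) as ->.
      { clear. induction n; simpl; auto. rewrite IHn. reflexivity. }
      apply vec_ext; intros i; unfold vsub, vadd, vscal; simpl. ring. }
    rewrite E. apply kbadd. apply kbscal; auto; lra. left. apply hp_K; auto.
Qed.

Lemma dom_bound f x y0 a c c' n : is_linear f -> (forall u, Kc phi Om u -> Kc phi Om (f u)) -> 0 < a -> 0 < c ->
  Kc phi Om (vsub (vscal a x) (f x)) -> Kc phi Om (vsub (vscal c x) y0) -> Kc phi Om (vsub (vscal c' y0) x) ->
  Kb phi Om (vsub (vscal (c * c' * a ^ n) y0) (hp f n y0)).
Proof.
  intros Hf HfK Ha Hc H1 H2 H3.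
  assert (E : vsub (vscal (c * c' * a ^ n) y0) (hp f n y0) =
     vadd (vscal (c * a ^ n) (vsub (vscal c' y0) x))
       (vadd (vscal c (vsub (vscal (a ^ n) x) (hp f n x))) (hp f n (vsub (vscal c x) y0)))).
  { rewrite (lin_sub _ (hp_lin f n Hf)), (lin_scal _ (hp_lin f n Hf)).
    apply vec_ext; intros i; unfold vsub, vadd, vscal. ring. }
  rewrite E. left. apply kcbadd.
  - apply kcscal; auto. apply Rmult_lt_0_compat; auto. apply pow_lt; auto.
  - apply kbadd. apply kbscal. apply pow_bound; auto. lra. left. apply hp_K; auto.
Qed.

End Conv.

Section Main.
Context {d : nat} (phi : vec d -> R) (Om : vec d -> Prop) (g ginv : vec d -> vec d) (V : vec d -> Prop).
Hypothesis Hphi : is_linear_form phi.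
Hypothesis Hproj : is_proj_set Om.
Hypothesis Hphi0 : forall u, Om u -> phi u <> 0.
Hypothesis Hopen : forall u, Om u -> exists eps, 0 < eps /\
      forall w : vec d, (forall i, Rabs (w i - u i) < eps) -> Om w.
Hypothesis Hconv : forall u v t, Om u -> Om v -> phi u = 1 -> phi v = 1 -> 0 <= t <= 1 ->
      Om (vadd (vscal (1 - t) u) (vscal t v)).
Hypothesis Hbdd : exists M, forall u, Om u -> phi u = 1 -> forall i, Rabs (u i) <= M.
Hypothesis Hg : is_linear g.
Hypothesis Hgi1 : forall u, ginv (g u) = u.
Hypothesis Hgi2 : forall u, g (ginv u) = u.
Hypothesis Hgom : forall u, Om u <-> Om (g u).
Hypothesis HV : is_subspace V.
Hypothesis HgV : forall u, V u <-> V (g u).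
Variable s : R.
Hypothesis Hs : s = 1 \/ s = -1.
Hypothesis HsK : forall u, Kc phi Om u -> Kc phi Om (vscal s (g u)).

Let kbadd := Kb_add phi Om Hphi Hproj Hphi0 Hconv.
Let kcbadd := Kc_Kb_add phi Om Hphi Hproj Hphi0 Hconv.
Let kcadd := Kc_add phi Om Hphi Hproj Hphi0 Hconv.
Let kbscal := Kb_scal phi Om Hphi Hproj.
Let kcscal := Kc_scal phi Om Hphi Hproj.

Definition h (u : vec d) : vec d := vscal s (g u).
Definition k (u : vec d) : vec d := vscal s (ginv u).

Lemma ss : s * s = 1.
Proof. destruct Hs as [-> | ->]; ring. Qed.

Lemma h_lin : is_linear h.
Proof.
  split; intros; unfold h; [rewrite (lin_add _ Hg) | rewrite (lin_scal _ Hg)];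
  apply vec_ext; intros; unfold vadd, vscal; ring.
Qed.

Lemma hk u : h (k u) = u.
Proof.
  unfold h, k. rewrite (lin_scal _ Hg), Hgi2. apply vec_ext; intros; unfold vscal.
  rewrite <- Rmult_assoc, ss; ring.
Qed.

Lemma kh u : k (h u) = u.
Proof.
  unfold h, k. assert (ginv (vscal s (g u)) = vscal s u) as ->.
  { rewrite <- (Hgi1 (vscal s u)). f_equal. rewrite (lin_scal _ Hg). reflexivity. }
  apply vec_ext; intros; unfold vscal. rewrite <- Rmult_assoc, ss; ring.
Qed.

Lemma h_inj u v : h u = h v -> u = v.
Proof. intros E. rewrite <- (kh u), <- (kh v), E. reflexivity. Qed.

Lemma k_lin : is_linear k.
Proof.
  split; intros; apply h_inj; rewrite ?(lin_add _ h_lin), ?(lin_scal _ h_lin), !hk; reflexivity.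
Qed.

Lemma s_nz : s <> 0.
Proof. destruct Hs as [-> | ->]; lra. Qed.

Lemma hK u : Kc phi Om u -> Kc phi Om (h u).
Proof. apply HsK. Qed.

Lemma Om_h u : Om u <-> Om (h u).
Proof.
  unfold h. split; intros H.
  - apply (Om_scal Om Hproj); [apply (proj1 (Hgom u)); auto | apply s_nz].
  - apply (proj2 (Hgom u)). assert (g u = vscal s (vscal s (g u))) as ->.
    { apply vec_ext; intros; unfold vscal. rewrite <- Rmult_assoc, ss; ring. }
    apply (Om_scal Om Hproj); auto. apply s_nz.
Qed.

Lemma kK u : Kc phi Om u -> Kc phi Om (k u).
Proof.
  intros [Hu pu].
  assert (Ok : Om (k u)) by (apply Om_h; rewrite hk; auto).
  split; auto.
  destruct (Rtotal_order (phi (k u)) 0) as [Hl|[He|Hg']]; auto.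
  - exfalso. assert (Kc phi Om (vscal (-1) (k u))).
    { split. apply (Om_scal Om Hproj); auto; lra. rewrite (form_scal phi Hphi). lra. }
    apply hK in H. rewrite (lin_scal _ h_lin), hk in H. destruct H as [_ H].
    rewrite (form_scal phi Hphi) in H. lra.
  - exfalso. apply (Hphi0 _ Ok He).
Qed.

Lemma V_scal c u : V u -> V (vscal c u).
Proof. destruct HV as [_ [_ H]]. apply H. Qed.
Lemma V_add u v : V u -> V v -> V (vadd u v).
Proof. destruct HV as [_ [H _]]. apply H. Qed.

Lemma hV u : V u -> V (h u).
Proof. intros; unfold h; apply V_scal, (proj1 (HgV u)); auto. Qed.
Lemma kV u : V u -> V (k u).
Proof.
  intros Hu. unfold k. apply V_scal. apply (proj2 (HgV (ginv u))). rewrite Hgi2. auto.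
Qed.

Lemma hpV f n u : (forall u, V u -> V (f u)) -> V u -> V (hp f n u).
Proof. intros Hf Hu; induction n; simpl; auto. Qed.

Lemma RsV y0 f rho N : (forall u, V u -> V (f u)) -> V y0 -> V (Rs y0 f rho N).
Proof.
  intros Hf Hy. induction N; simpl.
  - destruct HV as [H _]; exact H.
  - apply V_add; auto. apply V_scal. apply (hpV f (S N)); auto.
Qed.

Definition CV := proj_inter Om V.
Lemma CV_Om u : CV u -> Om u.
Proof. intros [H _]; auto. Qed.
Lemma CV_scal u c : CV u -> c <> 0 -> CV (vscal c u).
Proof. intros [H1 H2] Hc. split. apply (Om_scal Om Hproj); auto. apply V_scal; auto. Qed.
Lemma CV_line x y t : CV x -> CV y -> Om (Lp x y t) -> CV (Lp x y t).
Proof.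
  intros [_ Vx] [_ Vy] HO. split; auto. unfold Lp. apply V_add; auto. apply V_scal.
  assert (vsub y x = vadd y (vscal (-1) x)) as -> by (apply vec_ext; intros; unfold vsub, vadd, vscal; ring).
  apply V_add; auto. apply V_scal; auto.
Qed.
Lemma Om_scal' u c : Om u -> c <> 0 -> Om (vscal c u).
Proof. intros; apply (Om_scal Om Hproj); auto. Qed.
Lemma Om_line x y t : Om x -> Om y -> Om (Lp x y t) -> Om (Lp x y t).
Proof. auto. Qed.

Lemma rep_scal u c : c <> 0 -> phi u <> 0 -> chart_rep phi (vscal c u) = chart_rep phi u.
Proof.
  intros Hc Hu. unfold chart_rep. rewrite (form_scal phi Hphi).
  apply vec_ext; intros; unfold vscal. field. auto.
Qed.

Lemma h_rep u : Om u ->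
  0 < phi (h (chart_rep phi u)) /\
  h (chart_rep phi u) = vscal (phi (h (chart_rep phi u))) (chart_rep phi (g u)).
Proof.
  intros Hu. assert (Kx : Kc phi Om (chart_rep phi u)).
  { split. apply rep_Om; auto. rewrite (rep_phi phi Hphi); [lra|]. apply Hphi0; auto. }
  split. apply hK in Kx. destruct Kx; auto.
  assert (Hgu : phi (g u) <> 0) by (apply Hphi0; apply (proj1 (Hgom u)); auto).
  assert (Hu0 : phi u <> 0) by (apply Hphi0; auto).
  unfold h, chart_rep. rewrite (lin_scal _ Hg), !(form_scal phi Hphi).
  apply vec_ext; intros; unfold vscal. field. auto.
Qed.

Lemma hard u0 u r eps : CV u0 -> Om u -> hilbert_dist phi Om u (g u) r -> 0 < eps ->
  exists y r', CV y /\ hilbert_dist phi CV y (g y) r' /\ r' <= r + eps.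
Proof.
  intros Hu0 Hu Hd He.
  assert (Hgu : Om (g u)) by (apply (proj1 (Hgom u)); auto).
  destruct (rep_C phi Om Hphi Hphi0 Om (fun u H => H) Om_scal' u Hu) as [Ox px].
  destruct (rep_C phi Om Hphi Hphi0 Om (fun u H => H) Om_scal' (g u) Hgu) as [Oy py].
  destruct (h_rep u Hu) as [Hl Ehx].
  set (x := chart_rep phi u) in *. set (y' := chart_rep phi (g u)) in *.
  set (lam := phi (h x)) in *.
  set (q := exp (eps / 4)).
  assert (Hq : 1 < q) by (unfold q; pose proof (exp_ineq1 (eps/4) ltac:(lra)); lra).
  assert (Hab : exists a b, 0 < a /\ 0 < b /\ Kc phi Om (vsub (vscal a x) (h x)) /\
      Kc phi Om (vsub (vscal b (h x)) x) /\ a * b <= exp (2 * r) * (q * q)).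
  { destruct (classic (x = y')) as [E|Hne].
    - assert (r = 0) as ->.
      { destruct Hd as [[_ ?]|[Hne _]]; auto. contradiction. }
      exists (lam * q), (q / lam). refine (conj _ (conj _ (conj _ (conj _ _)))).
      + apply Rmult_lt_0_compat; lra.
      + apply Rdiv_lt_0_compat; lra.
      + rewrite Ehx, <- E. assert (vsub (vscal (lam * q) x) (vscal lam x) = vscal (lam * (q - 1)) x) as ->
          by (apply vec_ext; intros; unfold vsub, vscal; ring).
        apply kcscal. split; auto; lra. apply Rmult_lt_0_compat; lra.
      + rewrite Ehx, <- E. assert (vsub (vscal (q / lam) (vscal lam x)) x = vscal (q - 1) x) as ->
          by (apply vec_ext; intros; unfold vsub, vscal; field; lra).
        apply kcscal. split; auto; lra. lra.
      + rewrite Rmult_0_r, exp_0. right. field. lra.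
    - destruct (hd_lower phi Om Hphi Hphi0 Hopen Om (fun u H => H) Om_scal' Om_line u (g u) r (/ q)
         Hu Hgu Hd Hne) as [s1 [s2 [Hs1 [Hs2 [P1 [P2 Hb]]]]]].
      { split. apply Rinv_0_lt_compat; lra. rewrite <- Rinv_1. apply Rinv_lt_contravar; lra. }
      fold x y' in P1, P2.
      exists (lam * (1 - s1) / (- s1)), (s2 / (lam * (s2 - 1))). refine (conj _ (conj _ (conj _ (conj _ _)))).
      + apply Rdiv_lt_0_compat; [apply Rmult_lt_0_compat|]; lra.
      + apply Rdiv_lt_0_compat; [|apply Rmult_lt_0_compat]; lra.
      + rewrite Ehx. apply (conv_ab1 phi Om Hphi Hproj); auto.
      + rewrite Ehx. apply (conv_ab2 phi Om Hphi Hproj); auto.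
      + assert (E1 : lam * (1 - s1) / - s1 * (s2 / (lam * (s2 - 1))) = (1 - s1) / - s1 * (s2 / (s2 - 1)))
          by (field; repeat split; lra).
        rewrite E1. eapply Rle_trans; [exact Hb|]. right. field. lra. }
  destruct Hab as [a [b [Ha [Hb [K1 [K2 Hab]]]]]].
  assert (Hphx : phi (h x) = lam) by reflexivity.
  assert (Hal : lam < a).
  { destruct K1 as [_ K1]. rewrite (form_sub phi Hphi), (form_scal phi Hphi), px in K1. change (phi (h x)) with lam in K1. lra. }
  assert (Hbl : 1 < b * lam).
  { destruct K2 as [_ K2]. rewrite (form_sub phi Hphi), (form_scal phi Hphi), px in K2. change (phi (h x)) with lam in K2. lra. }
  assert (Hab1 : 1 < a * b) by nra.
  assert (K3 : Kc phi Om (vsub (vscal b x) (k x))).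
  { assert (vsub (vscal b x) (k x) = k (vsub (vscal b (h x)) x)) as ->.
    { rewrite (lin_sub _ k_lin), (lin_scal _ k_lin), kh. reflexivity. }
    apply kK; auto. }
  destruct Hu0 as [Ou0 Vu0].
  destruct (rep_C phi Om Hphi Hphi0 CV CV_Om CV_scal u0 (conj Ou0 Vu0)) as [[Ow0 Vw0] pw0].
  set (w0 := chart_rep phi u0) in *.
  assert (Kw0 : Kc phi Om w0) by (split; auto; lra).
  assert (Kx : Kc phi Om x) by (split; auto; lra).
  destruct (Kc_dom phi Om Hphi Hproj Hopen x w0 Kx) as [c [Hc Kc1]].
  destruct (Kc_dom phi Om Hphi Hproj Hopen w0 x Kw0) as [c' [Hc' Kc2]].
  set (Cst := c * c').
  set (rho := a * q). set (rho' := b * q).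
  assert (Hr : 0 < rho) by (unfold rho; nra).
  assert (Hr' : 0 < rho') by (unfold rho'; nra).
  assert (Hrr : 1 < rho * rho') by (unfold rho, rho'; nra).
  assert (D1 : 0 < rho - / rho').
  { assert (rho - / rho' = (rho * rho' - 1) / rho') as -> by (field; lra). apply Rdiv_lt_0_compat; lra. }
  assert (D2 : 0 < rho' - / rho).
  { assert (rho' - / rho = (rho * rho' - 1) / rho) as -> by (field; lra). apply Rdiv_lt_0_compat; lra. }
  assert (HCst : 0 < Cst) by (unfold Cst; nra).
  destruct (Pow_x_infinity q ltac:(rewrite Rabs_right; lra) (Cst * a / (rho - / rho') + Cst * b / (rho' - / rho) + 1))
    as [N HN].
  specialize (HN N (le_n N)). rewrite Rabs_right in HN by (left; apply pow_lt; lra).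
  assert (HqN : 0 < q ^ N) by (apply pow_lt; lra).
  assert (T1 : 0 < Cst * a / (rho - / rho')) by (apply Rdiv_lt_0_compat; nra).
  assert (T2 : 0 < Cst * b / (rho' - / rho)) by (apply Rdiv_lt_0_compat; nra).
  assert (E1 : / rho ^ N * (Cst * a ^ S N) = Cst * a / q ^ N).
  { unfold rho. rewrite Rpow_mult_distr. simpl. field. split; apply pow_nonzero; lra. }
  assert (E2 : / rho' ^ N * (Cst * b ^ S N) = Cst * b / q ^ N).
  { unfold rho'. rewrite Rpow_mult_distr. simpl. field. split; apply pow_nonzero; lra. }
  assert (M1 : 0 < rho - / rho' - / rho ^ N * (Cst * a ^ S N)).
  { rewrite E1. assert (Cst * a / q ^ N < rho - / rho'); [|lra].
    apply Rmult_lt_reg_r with (q ^ N); auto. unfold Rdiv. rewrite Rmult_assoc, Rinv_l by lra.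
    assert (Cst * a < (rho - / rho') * (Cst * a / (rho - / rho') + Cst * b / (rho' - / rho) + 1)).
    { assert ((rho - / rho') * (Cst * a / (rho - / rho')) = Cst * a) by (field; lra). nra. }
    nra. }
  assert (M2 : 0 < rho' - / rho - / rho' ^ N * (Cst * b ^ S N)).
  { rewrite E2. assert (Cst * b / q ^ N < rho' - / rho); [|lra].
    apply Rmult_lt_reg_r with (q ^ N); auto. unfold Rdiv. rewrite Rmult_assoc, Rinv_l by lra.
    assert (Cst * b < (rho' - / rho) * (Cst * a / (rho - / rho') + Cst * b / (rho' - / rho) + 1)).
    { assert ((rho' - / rho) * (Cst * b / (rho' - / rho)) = Cst * b) by (field; lra). nra. }
    nra. }
  pose proof (dom_bound phi Om Hphi Hproj Hphi0 Hconv h x w0 a c c' (S N) h_lin hK Ha Hc K1 Kc1 Kc2) as B1.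
  pose proof (dom_bound phi Om Hphi Hproj Hphi0 Hconv k x w0 b c c' (S N) k_lin kK Hb Hc K3 Kc1 Kc2) as B2.
  pose proof (key phi Om Hphi Hproj Hphi0 Hconv h k h_lin hk kK w0 rho rho' N Cst a Hr Hr' Kw0 B1 M1 (Rlt_le _ _ D1)) as KY1.
  pose proof (key phi Om Hphi Hproj Hphi0 Hconv k h k_lin kh hK w0 rho' rho N Cst b Hr' Hr Kw0 B2 M2 (Rlt_le _ _ D2)) as KY2.
  set (Y := Ym h k w0 rho rho' N) in *.
  assert (EY : Ym k h w0 rho' rho N = Y).
  { unfold Y, Ym. apply vec_ext; intros; unfold vadd; ring. }
  rewrite EY in KY2.
  assert (KY3 : Kc phi Om (vsub (vscal rho' (h Y)) Y)).
  { assert (vsub (vscal rho' (h Y)) Y = h (vsub (vscal rho' Y) (k Y))) as ->.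
    { rewrite (lin_sub _ h_lin), (lin_scal _ h_lin), hk. reflexivity. }
    apply hK; auto. }
  assert (KY : Kc phi Om Y).
  { unfold Y, Ym. apply kcbadd; auto. apply kbadd; apply (Rs_Kb phi Om Hphi Hproj Hphi0 Hconv); auto using hK, kK. }
  assert (CY : CV Y).
  { split. destruct KY; auto. unfold Y, Ym. apply V_add; auto. apply V_add; apply RsV; auto. apply hV. apply kV. }
  assert (CgY : CV (g Y)).
  { destruct CY as [OY VY]. split. apply (proj1 (Hgom Y)); auto. apply (proj1 (HgV Y)); auto. }
  destruct (hd_exists phi Om Hphi Hphi0 Hbdd CV CV_Om CV_scal Y (g Y) CY CgY) as [r' Hr'd].
  exists Y, r'. split; auto. split; auto.
  destruct (h_rep Y (CV_Om _ CY)) as [HlY EhY].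
  destruct (rep_C phi Om Hphi Hphi0 CV CV_Om CV_scal Y CY) as [CxY pxY].
  destruct (rep_C phi Om Hphi Hphi0 CV CV_Om CV_scal (g Y) CgY) as [CyY pyY].
  set (xY := chart_rep phi Y) in *. set (yY := chart_rep phi (g Y)) in *.
  set (lamY := phi (h xY)) in *.
  assert (HpY : 0 < phi Y) by (destruct KY; auto).
  assert (EX : xY = vscal (/ phi Y) Y) by reflexivity.
  assert (Q1 : Kc phi Om (vsub (vscal rho xY) (vscal lamY yY))).
  { rewrite <- EhY, EX, (lin_scal _ h_lin).
    assert (vsub (vscal rho (vscal (/ phi Y) Y)) (vscal (/ phi Y) (h Y)) = vscal (/ phi Y) (vsub (vscal rho Y) (h Y))) as ->
      by (apply vec_ext; intros; unfold vsub, vscal; ring).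
    apply kcscal; auto. apply Rinv_0_lt_compat; auto. }
  assert (Q2 : Kc phi Om (vsub (vscal rho' (vscal lamY yY)) xY)).
  { rewrite <- EhY, EX, (lin_scal _ h_lin).
    assert (vsub (vscal rho' (vscal (/ phi Y) (h Y))) (vscal (/ phi Y) Y) = vscal (/ phi Y) (vsub (vscal rho' (h Y)) Y)) as ->
      by (apply vec_ext; intros; unfold vsub, vscal; ring).
    apply kcscal; auto. apply Rinv_0_lt_compat; auto. }
  destruct (conv_ba1 phi Om Hphi Hproj xY yY lamY rho pxY pyY HlY Q1) as [R1 L1].
  destruct (conv_ba2 phi Om Hphi Hproj xY yY lamY rho' pxY pyY HlY Q2) as [R2 L2].
  assert (t1n : - lamY / (rho - lamY) < 0).
  { unfold Rdiv. rewrite Ropp_mult_distr_l_reverse. apply Ropp_lt_gt_0_contravar. apply Rdiv_lt_0_compat; lra. }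
  assert (t2p : 1 < rho' * lamY / (rho' * lamY - 1)).
  { apply Rmult_lt_reg_r with (rho' * lamY - 1); [lra|]. unfold Rdiv. rewrite Rmult_assoc, Rinv_l by lra. lra. }
  pose proof (hd_upper phi CV Y (g Y) r' _ _ CY CgY Hr'd t1n t2p
     (CV_line _ _ _ CxY CyY L1) (CV_line _ _ _ CxY CyY L2)) as HU.
  assert (EF : (1 - - lamY / (rho - lamY)) / - (- lamY / (rho - lamY)) *
      (rho' * lamY / (rho' * lamY - 1) / (rho' * lamY / (rho' * lamY - 1) - 1)) = rho * rho').
  { field. repeat split; lra. }
  rewrite EF in HU.
  assert (Hln : ln (rho * rho') <= 2 * r + eps).
  { assert (ln (exp (2 * r) * (q * q * q * q)) = 2 * r + eps).
    { rewrite !ln_mult; try (apply exp_pos || nra). unfold q. rewrite !ln_exp. lra.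
      all: try apply Rmult_lt_0_compat; try apply Rmult_lt_0_compat; try apply exp_pos; lra. }
    rewrite <- H. apply ln_le'. nra.
    unfold rho, rho'. assert (0 < exp (2*r)) by apply exp_pos. nra. }
  lra.
Qed.

End Main.

Lemma sign_exists {d} (phi : vec d -> R) (Om : vec d -> Prop) (g : vec d -> vec d) u0 :
  is_linear_form phi -> is_proj_set Om -> (forall u, Om u -> phi u <> 0) ->
  (forall u v t, Om u -> Om v -> phi u = 1 -> phi v = 1 -> 0 <= t <= 1 ->
      Om (vadd (vscal (1 - t) u) (vscal t v))) ->
  is_linear g -> (forall u, Om u <-> Om (g u)) -> Om u0 ->
  exists s, (s = 1 \/ s = -1) /\ forall u, Kc phi Om u -> Kc phi Om (vscal s (g u)).
Proof.
  intros Hphi Hproj Hphi0 Hconv Hg Hgom Hu0.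
  set (w0 := chart_rep phi u0).
  assert (Kw0 : Kc phi Om w0).
  { split. apply rep_Om; auto. unfold w0. rewrite (rep_phi phi Hphi); [lra|]. apply Hphi0; auto. }
  set (p0 := phi (g w0)).
  assert (Hp0 : p0 <> 0) by (apply Hphi0, (proj1 (Hgom w0)), Kw0).
  set (s := if Rlt_dec 0 p0 then 1 else -1).
  assert (Hs : s = 1 \/ s = -1) by (unfold s; destruct (Rlt_dec 0 p0); auto).
  assert (Hsp : 0 < s * p0).
  { unfold s; destruct (Rlt_dec 0 p0); lra. }
  exists s. split; auto. intros u Ku.
  assert (Ogu : Om (g u)) by (apply (proj1 (Hgom u)), Ku).
  assert (Hsn : s <> 0) by lra.
  split. apply (Om_scal Om Hproj); auto.
  rewrite (form_scal phi Hphi).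
  assert (Hgu : phi (g u) <> 0) by (apply Hphi0; auto).
  destruct (Rtotal_order 0 (s * phi (g u))) as [H|[H|H]]; auto.
  - exfalso. apply Hgu. assert (s * s = 1) by (destruct Hs as [-> | ->]; ring). nra.
  - exfalso.
    set (su := s * phi (g u)) in *.
    set (z := vadd (vscal (- su) w0) (vscal (s * p0) u)).
    assert (Kz : Kc phi Om z).
    { apply (Kc_add phi Om Hphi Hproj Hphi0 Hconv); apply (Kc_scal phi Om Hphi Hproj); auto; lra. }
    destruct Kz as [Oz _].
    apply (Hphi0 (g z)). apply (proj1 (Hgom z)); auto.
    unfold z. rewrite (lin_add _ Hg), !(lin_scal _ Hg), (form_add phi Hphi), !(form_scal phi Hphi).
    fold p0. unfold su. ring.
Qed.

Lemma params_eq {d} (Om V : vec d -> Prop) x y : is_subspace V -> CV Om V x -> CV Om V y ->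
  line_params (CV Om V) x y = line_params Om x y.
Proof.
  intros HV Cx Cy. apply functional_extensionality; intros t. apply propositional_extensionality.
  unfold line_params. split. intros [H _]; auto. intros H. apply (CV_line Om V HV x y t Cx Cy H).
Qed.

Lemma hd_sub {d} (phi : vec d -> R) (Om V : vec d -> Prop) u v r :
  is_linear_form phi -> is_proj_set Om -> (forall u, Om u -> phi u <> 0) -> is_subspace V ->
  CV Om V u -> CV Om V v -> hilbert_dist phi (CV Om V) u v r -> hilbert_dist phi Om u v r.
Proof.
  intros Hphi Hproj Hphi0 HV Cu Cv Hd.
  destruct (rep_C phi Om Hphi Hphi0 (CV Om V) (CV_Om Om V) (CV_scal Om V Hproj HV) u Cu) as [Cx _].
  destruct (rep_C phi Om Hphi Hphi0 (CV Om V) (CV_Om Om V) (CV_scal Om V Hproj HV) v Cv) as [Cy _].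
  unfold hilbert_dist in *. rewrite (params_eq Om V _ _ HV Cx Cy) in Hd. exact Hd.
Qed.

Theorem mainTheorem11 (d : nat) (phi : vec d -> R) (Om : vec d -> Prop)
  (g : vec d -> vec d) (V : vec d -> Prop) :
  properly_convex_in_chart phi Om ->
  is_aut Om g ->
  is_subspace V ->
  dim_gt_1 V ->
  (exists u, proj_inter Om V u) ->
  (forall u, V u <-> V (g u)) ->
  exists m,
    is_translation_length phi (proj_inter Om V) g m /\
    is_translation_length phi Om g m.
Proof.
  intros [Hphi [Hproj [Hne [Hphi0 [Hopen [Hconv Hbdd]]]]]] [[Hglin [ginv [Hgi1 Hgi2]]] Hgom] HV Hdim [u0 Hu0] HgV.
  assert (Cu0 : CV Om V u0) by exact Hu0.
  destruct (sign_exists phi Om g u0 Hphi Hproj Hphi0 Hconv Hglin Hgom (CV_Om Om V u0 Cu0)) as [s [Hs HsK]].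
  assert (CgC : forall u, CV Om V u -> CV Om V (g u)).
  { intros u [Ou Vu]. split. apply (proj1 (Hgom u)); auto. apply (proj1 (HgV u)); auto. }
  destruct (glb_ex (displacements phi (CV Om V) g)) as [m [Hm1 Hm2]].
  - destruct (hd_exists phi Om Hphi Hphi0 Hbdd (CV Om V) (CV_Om Om V) (CV_scal Om V Hproj HV) u0 (g u0) Cu0 (CgC u0 Cu0)) as [r Hr].
    exists r, u0. split; auto.
  - exists 0. intros r [u [Cu Hd]].
    apply (hd_nonneg phi Om Hphi Hphi0 Hopen (CV Om V) (CV_Om Om V) (CV_scal Om V Hproj HV) (CV_line Om V HV) u (g u) r Cu (CgC u Cu) Hd).
  - exists m. split; [split; auto|]. split.
    + intros r [u [Ou Hd]]. apply Rnot_lt_le. intros Hlt.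
      destruct (hard phi Om g ginv V Hphi Hproj Hphi0 Hopen Hconv Hbdd Hglin Hgi1 Hgi2 Hgom HV HgV s Hs HsK
                  u0 u r ((m - r) / 2) Cu0 Ou Hd ltac:(lra)) as [y [r' [Cy [Hd' Hle]]]].
      assert (m <= r') by (apply Hm1; exists y; split; auto).
      lra.
    + intros b Hb. apply Hm2. intros r [u [Cu Hd]]. apply Hb. exists u. split. apply (CV_Om Om V); auto.
      apply (hd_sub phi Om V u (g u) r Hphi Hproj Hphi0 HV Cu (CgC u Cu) Hd).
Qed.
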